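(* Let $X$ be a $3$-long liner. If $X$ is proaffine, then any lines $L,\Lambda$ in $X$ satisfy $|L|\le|\Lambda|+2$. If $X$ is Proclus, then any lines $L,\Lambda$ in $X$ satisfy $|L|\le|\Lambda|+1$.
   Context: A liner is a set $X$ of points with a family of subsets called lines such that any two distinct points lie in a unique line and every line contains at least two points. For distinct $x,y$, $\overline{xy}$ is the line through them and $\overline{xx}:=\{x\}$. A set is flat if it contains $\overline{xy}$ for all its distinct points; $\overline A$ is the smallest flat containing $A$; the rank $\|A\|$ is the smallest cardinality of $B$ with $A\subseteq\overline B$; a plane is a flat of rank 3. $X$ is $3$-long if every line has at least $3$ points. $X$ is proaffine if for all $o,x,y\in X$ and $p\in\overline{xy}\setminus\overline{ox}$ there exists $u\in\overline{oy}$ such that $\overline{vp}\cap\overline{ox}\ne\varnothing$ for every $v\in\overline{oy}\setminus\{u\}$. $X$ is Proclus if for every plane $P$, line $L\subseteq P$ and point $x\in P\setminus L$ there is at most one line $\Lambda$ with $x\in\Lambda\subseteq P\setminus L$. *)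

(* Defs.v *)
From Stdlib Require Import List Arith.
Import ListNotations.
Set Implicit Arguments.

Section Liner.
Variable X : Type.
Variable Line : (X -> Prop) -> Prop.

Definition subset (A B : X -> Prop) : Prop := forall z, A z -> B z.

Definition is_liner : Prop :=
  (forall L, Line L -> exists a b, a <> b /\ L a /\ L b) /\
  (forall x y, x <> y ->
     exists L, Line L /\ L x /\ L y /\
       forall L', Line L' -> L' x -> L' y -> L' = L).

Definition lxy (x y : X) : X -> Prop := fun z =>
  (x = y /\ z = x) \/ (x <> y /\ exists L, Line L /\ L x /\ L y /\ L z).

Definition flat (A : X -> Prop) : Prop :=
  forall x y, A x -> A y -> x <> y -> subset (lxy x y) A.

Definition closure (A : X -> Prop) : X -> Prop := fun z =>
  forall F, flat F -> subset A F -> F z.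

(* ||A|| = n : n is the smallest cardinality of a set B with A ⊆ cl B.
   (A set of cardinality n is the set of entries of a duplicate-free list
   of length n; only finite B can realize a finite rank.) *)
Definition has_rank (A : X -> Prop) (n : nat) : Prop :=
  (exists B : list X, NoDup B /\ length B = n /\
      subset A (closure (fun z => In z B))) /\
  (forall B : list X, NoDup B -> subset A (closure (fun z => In z B)) ->
      n <= length B).

Definition plane (P : X -> Prop) : Prop := flat P /\ has_rank P 3.

Definition three_long : Prop :=
  forall L, Line L -> exists a b c, L a /\ L b /\ L c /\
     a <> b /\ a <> c /\ b <> c.

Definition proaffine : Prop :=
  forall o x y p, lxy x y p -> ~ lxy o x p ->
    exists u, lxy o y u /\
      forall v, lxy o y v -> v <> u ->
        exists w, lxy v p w /\ lxy o x w.

Definition proclus : Prop :=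
  forall P L x, plane P -> Line L -> subset L P -> P x -> ~ L x ->
    forall M1 M2, Line M1 -> Line M2 ->
      M1 x -> subset M1 (fun z => P z /\ ~ L z) ->
      M2 x -> subset M2 (fun z => P z /\ ~ L z) ->
      M1 = M2.
End Liner.

(* Cardinal inequality |A| <= |B| + k : there is an injection from A into
   the disjoint union of B and a k-element set. *)
Definition card_le_plus (X : Type) (A B : X -> Prop) (k : nat) : Prop :=
  exists f : {x | A x} -> ({y | B y} + {i : nat | i < k})%type,
    forall a1 a2, f a1 = f a2 -> a1 = a2.

(* Main.v *)
Require Import Defs.
From Stdlib Require Import List Arith Lia Classical ClassicalEpsilon ProofIrrelevance FinFun.
Import ListNotations.
Set Implicit Arguments.


Section Fin.
Variable T : Type.

Definition edec (x y : T) : {x = y} + {x <> y} := excluded_middle_informative (x = y).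
Definition pb (P : Prop) : bool := if excluded_middle_informative P then true else false.
Lemma pb_true P : pb P = true <-> P.
Proof. unfold pb; destruct (excluded_middle_informative P); split; intros; auto; discriminate. Qed.
Lemma pb_false P : pb P = false <-> ~ P.
Proof. unfold pb; destruct (excluded_middle_informative P); split; intros; auto; try discriminate; contradiction. Qed.

Definition enum (A : T -> Prop) (l : list T) := NoDup l /\ forall x, A x <-> In x l.

Lemma cover_enum (A : T -> Prop) l : (forall x, A x -> In x l) -> exists l', enum A l'.
Proof.
  intros H. exists (nodup edec (filter (fun x => pb (A x)) l)). split.
  - apply NoDup_nodup.
  - intros x. rewrite nodup_In, filter_In, pb_true. intuition.
Qed.

Lemma nodup_map_on (U : Type) (f : T -> U) l :
  NoDup l -> (forall x y, In x l -> In y l -> f x = f y -> x = y) -> NoDup (map f l).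
Proof.
  induction l as [|a l IH]; simpl; intros Hn Hi; constructor; inversion Hn; subst.
  - intros Hin. apply in_map_iff in Hin as [y [Hy Hyl]].
    assert (y = a) by (apply Hi; auto). subst; contradiction.
  - apply IH; auto.
Qed.

Lemma inj_len (A B : T -> Prop) lA lB (f : T -> T) :
  enum A lA -> enum B lB -> (forall x, A x -> B (f x)) ->
  (forall x y, A x -> A y -> f x = f y -> x = y) -> length lA <= length lB.
Proof.
  intros [HA HA'] [HB HB'] Hf Hi.
  rewrite <- (length_map f lA). apply NoDup_incl_length.
  - apply nodup_map_on; auto. intros x y Hx Hy; apply Hi; apply HA'; auto.
  - intros y Hy. apply in_map_iff in Hy as [x [<- Hx]]. apply HB', Hf, HA', Hx.
Qed.

Lemma enum_len (A : T -> Prop) l1 l2 : enum A l1 -> enum A l2 -> length l1 = length l2.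
Proof.
  intros H1 H2. apply Nat.le_antisymm; [apply (@inj_len A A l1 l2 (fun x => x)) | apply (@inj_len A A l2 l1 (fun x => x))]; auto.
Qed.

Lemma enum_ext (A B : T -> Prop) l : (forall x, A x <-> B x) -> enum A l -> enum B l.
Proof. intros H [H1 H2]; split; auto. intros x; rewrite <- H; auto. Qed.

Lemma enum_sub (A B : T -> Prop) lA lB : enum A lA -> enum B lB -> (forall x, A x -> B x) ->
  length lA <= length lB.
Proof. intros H1 H2 H. apply (@inj_len A B lA lB (fun x => x)); auto. Qed.

Lemma enum_sub_strict (A B : T -> Prop) lA lB w : enum A lA -> enum B lB -> (forall x, A x -> B x) ->
  B w -> ~ A w -> S (length lA) <= length lB.
Proof.
  intros [H1 H1'] [H2 H2'] H Bw Aw.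
  change (S (length lA)) with (length (w :: lA)). apply NoDup_incl_length.
  - constructor; auto. rewrite <- H1'; auto.
  - intros x [<-|Hx]; apply H2'; auto. apply H, H1'; auto.
Qed.

Lemma enum_remove (A : T -> Prop) l a : enum A l -> A a ->
  exists l', enum (fun x => A x /\ x <> a) l' /\ S (length l') = length l.
Proof.
  intros [H1 H2] Ha. assert (Hin : In a l) by (apply H2; auto).
  apply in_split in Hin as [l1 [l2 ->]].
  exists (l1 ++ l2). split.
  - split. { eapply NoDup_remove_1; eauto. }
    intros x. rewrite H2. rewrite !in_app_iff. simpl.
    apply NoDup_remove_2 in H1. rewrite in_app_iff in H1.
    split. { intros [[H|[H|H]] Hx]; auto; congruence. }
    intros [H|H]; split; auto; intros ->; auto.
  - rewrite !length_app; simpl; lia.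
Qed.

Lemma len_le_1 (l : list T) : NoDup l -> (forall a b, In a l -> In b l -> a = b) -> length l <= 1.
Proof.
  destruct l as [|a [|b l]]; simpl; intros Hn H; try lia.
  assert (a = b) by (apply H; auto). subst. inversion Hn; subst. simpl in *. tauto.
Qed.

Lemma filter_split (p : T -> bool) l : length l = length (filter p l) + length (filter (fun x => negb (p x)) l).
Proof. induction l; simpl; auto. destruct (p a); simpl; lia. Qed.

Fixpoint sumn (l : list nat) : nat := match l with [] => 0 | a :: l => a + sumn l end.

Lemma sumn_add (D : list T) (a b : T -> nat) : sumn (map (fun d => a d + b d) D) = sumn (map a D) + sumn (map b D).
Proof. induction D; simpl; lia. Qed.

Lemma sumn_zero (D : list T) : sumn (map (fun _ => 0) D) = 0.
Proof. induction D; simpl; lia. Qed.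

Lemma sumn_ind (D : list T) (y : T) : NoDup D -> In y D ->
  sumn (map (fun d => if edec y d then 1 else 0) D) = 1.
Proof.
  induction D as [|d D IH]; simpl; intros Hn Hin; [contradiction|]. inversion Hn; subst.
  destruct (edec y d) as [->|Hne].
  - assert (sumn (map (fun d0 => if edec d d0 then 1 else 0) D) = 0).
    { clear IH Hin Hn. induction D as [|e D IH2]; simpl; auto. destruct (edec d e).
      subst; simpl in H1; tauto. simpl in *. apply IH2; auto. inversion H2; auto. }
    lia.
  - destruct Hin as [->|Hin]; [tauto|]. rewrite IH; auto.
Qed.

Lemma count_partition (g : T -> T) (D l : list T) : NoDup D -> (forall x, In x l -> In (g x) D) ->
  length l = sumn (map (fun d => length (filter (fun x => if edec (g x) d then true else false) l)) D).
Proof.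
  intros HD. induction l as [|x l IH]; simpl; intros H.
  - symmetry; apply sumn_zero.
  - transitivity (sumn (map (fun d => (if edec (g x) d then 1 else 0) +
          length (filter (fun x0 => if edec (g x0) d then true else false) l)) D)).
    + rewrite sumn_add, sumn_ind, IH; auto.
    + f_equal. apply map_ext. intros d. destruct (edec (g x) d); simpl; auto.
Qed.

Lemma filter_enum (A : T -> Prop) l (p : T -> bool) : enum A l ->
  enum (fun x => A x /\ p x = true) (filter p l).
Proof.
  intros [H1 H2]. split. apply NoDup_filter; auto.
  intros x. rewrite filter_In, H2. tauto.
Qed.

Lemma sumn_two_vals (D : list T) (s : T -> nat) k : (forall d, In d D -> s d = 0 \/ s d = k) ->
  exists t, t <= length D /\ sumn (map s D) = t * k.
Proof.
  induction D as [|d D IH]; simpl; intros H.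
  - exists 0; auto.
  - destruct IH as [t [Ht Hs]]; auto. destruct (H d) as [E|E]; auto.
    + exists t. split; lia.
    + exists (S t). split; simpl; lia.
Qed.

Lemma sumn_const (D : list T) (s : T -> nat) k : (forall d, In d D -> s d = k) ->
  sumn (map s D) = length D * k.
Proof. induction D; simpl; intros H; auto. Qed.

Lemma fin_or_ded (A : T -> Prop) :
  (exists l, enum A l) \/
  (exists e : nat -> T, (forall n, A (e n)) /\ forall n m, e n = e m -> n = m).
Proof.
  destruct (classic (exists l, forall x, A x -> In x l)) as [[l Hl]|Hn].
  - left. eapply cover_enum; eauto.
  - right. assert (Hp : forall l, {x | A x /\ ~ In x l}).
    { intros l. apply constructive_indefinite_description.
      apply not_all_not_ex. intros H. apply Hn. exists l. intros x Hx.
      destruct (classic (In x l)); auto. exfalso; apply (H x); auto. }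
    set (pick := fun l => proj1_sig (Hp l)).
    assert (Hpick : forall l, A (pick l) /\ ~ In (pick l) l) by (intros l; exact (proj2_sig (Hp l))).
    set (gen := fix gen n := match n with 0 => [] | S n => pick (gen n) :: gen n end).
    exists (fun n => pick (gen n)). split. { intros n; apply Hpick. }
    assert (Hin : forall n m, n < m -> In (pick (gen n)) (gen m)).
    { intros n m; induction m; intros Hlt; [lia|]. simpl.
      destruct (Nat.eq_dec n m) as [->|]; [left; auto| right; apply IHm; lia]. }
    intros n m E. destruct (lt_eq_lt_dec n m) as [[Hlt|]|Hlt]; auto.
    + exfalso. apply (proj2 (Hpick (gen m))). rewrite <- E. apply Hin; auto.
    + exfalso. apply (proj2 (Hpick (gen n))). rewrite E. apply Hin; auto.
Qed.

Definition inj_plus (A B : T -> Prop) k := exists f : T -> T + nat,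
  (forall x, A x -> match f x with inl y => B y | inr i => i < k end) /\
  (forall x y, A x -> A y -> f x = f y -> x = y).

Lemma inj_plus_card (A B : T -> Prop) k : inj_plus A B k -> card_le_plus A B k.
Proof.
  intros [f [Hf Hi]].
  set (F := fun a : {x | A x} =>
    match f (proj1_sig a) as r return (match r with inl y => B y | inr i => i < k end) ->
       ({y | B y} + {i : nat | i < k})%type with
    | inl y => fun h => inl (exist _ y h)
    | inr i => fun h => inr (exist _ i h) end (Hf _ (proj2_sig a))).
  exists F. intros [x1 h1] [x2 h2] E.
  assert (f x1 = f x2).
  { unfold F in E; simpl in E. generalize dependent (Hf x1 h1). generalize dependent (Hf x2 h2).
    destruct (f x1), (f x2); intros; try discriminate; inversion E; auto. }
  assert (x1 = x2) by (apply Hi; auto). subst. f_equal. apply proof_irrelevance.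
Qed.

Lemma inj_plus_comp (A B C : T -> Prop) k1 k2 : inj_plus A B k1 -> inj_plus B C k2 -> inj_plus A C (k1 + k2).
Proof.
  intros [f [Hf Hfi]] [g [Hg Hgi]].
  exists (fun x => match f x with inl y => match g y with inl z => inl z | inr j => inr (k1 + j) end
                                  | inr i => inr i end). split.
  - intros x Hx. specialize (Hf x Hx). destruct (f x) as [y|i]; [|lia].
    specialize (Hg y Hf). destruct (g y); auto; lia.
  - intros x x' Hx Hx' E. apply Hfi; auto.
    pose proof (Hf x Hx) as H1. pose proof (Hf x' Hx') as H2.
    destruct (f x) as [y|i], (f x') as [y'|i'].
    + pose proof (Hg y H1). pose proof (Hg y' H2).
      destruct (g y) eqn:E1, (g y') eqn:E2; inversion E; subst.
      * f_equal; apply Hgi; congruence.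
      * assert (n = n0) by lia. subst. f_equal; apply Hgi; congruence.
    + destruct (g y); inversion E; lia.
    + destruct (g y'); inversion E; lia.
    + auto.
Qed.

Lemma inj_plus_mono (A B : T -> Prop) k k' : k <= k' -> inj_plus A B k -> inj_plus A B k'.
Proof.
  intros Hk [f [Hf Hi]]. exists f; split; auto. intros x Hx; specialize (Hf x Hx); destruct (f x); auto; lia.
Qed.

Lemma inj_plus_refl (A : T -> Prop) k : inj_plus A A k.
Proof. exists inl. split; auto. intros x y _ _ E; inversion E; auto. Qed.

Lemma inj_plus_fin (A B : T -> Prop) k lB : inj_plus A B k -> enum B lB ->
  exists lA, enum A lA /\ length lA <= length lB + k.
Proof.
  intros [f [Hf Hi]] [HB HB'].
  destruct (classic (exists x0, A x0)) as [[x0 Hx0]|Hne].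
  2:{ exists []. split; [split; [constructor|]|simpl; lia]. intros x; split; simpl; [|tauto].
      intros Hx; apply Hne; eauto. }
  set (g := fun v => epsilon (inhabits x0) (fun x => A x /\ f x = v)).
  assert (Hcov : forall x, A x -> In x (map g (map inl lB ++ map inr (seq 0 k)))).
  { intros x Hx. apply in_map_iff. exists (f x). split.
    - unfold g. assert (Hs : A (epsilon (inhabits x0) (fun x1 => A x1 /\ f x1 = f x)) /\
         f (epsilon (inhabits x0) (fun x1 => A x1 /\ f x1 = f x)) = f x).
      { apply epsilon_spec. eauto. }
      apply Hi; tauto.
    - specialize (Hf x Hx). rewrite in_app_iff. destruct (f x) as [y|i].
      + left; apply in_map, HB', Hf.
      + right; apply in_map, in_seq; lia. }
  destruct (cover_enum _ _ Hcov) as [lA HA]. exists lA. split; auto.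
  destruct HA as [HA HA'].
  rewrite <- (length_map f lA).
  replace (length lB + k) with (length (map inl lB ++ map inr (seq 0 k) : list (T + nat)))
    by (rewrite length_app, !length_map, length_seq; auto).
  apply NoDup_incl_length.
  - apply nodup_map_on; auto. intros x y Hx Hy; apply Hi; apply HA'; auto.
  - intros v Hv. apply in_map_iff in Hv as [x [<- Hx]]. apply HA' in Hx.
    specialize (Hf x Hx). rewrite in_app_iff. destruct (f x) as [y|i].
    + left; apply in_map, HB', Hf.
    + right; apply in_map, in_seq; lia.
Qed.

Lemma list_inj (U : Type) (u0 : U) (lA : list T) (tl : list U) : NoDup lA -> NoDup tl -> length lA <= length tl ->
  exists f : T -> U, (forall x, In x lA -> In (f x) tl) /\
     (forall x y, In x lA -> In y lA -> f x = f y -> x = y).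
Proof.
  revert tl. induction lA as [|a l IH]; intros tl HA Ht Hlen.
  - exists (fun _ => u0). split; simpl; tauto.
  - destruct tl as [|t tl]; simpl in Hlen; [lia|].
    apply NoDup_cons_iff in HA as [Ha Hl]. apply NoDup_cons_iff in Ht as [Htn Htl].
    destruct (IH tl) as [f [Hf Hi]]; auto; try lia.
    exists (fun x => if edec x a then t else f x). split.
    + intros x [<-|Hx]. { destruct (edec a a); simpl; tauto. }
      destruct (edec x a); simpl; auto.
    + intros x y Hx Hy E.
      destruct (edec x a) as [Ex|Ex], (edec y a) as [Ey|Ey].
      * congruence.
      * exfalso. destruct Hy as [Hy|Hy]; [congruence|]. apply Htn. rewrite E. auto.
      * exfalso. destruct Hx as [Hx|Hx]; [congruence|]. apply Htn. rewrite <- E. auto.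
      * destruct Hx as [Hx|Hx]; [congruence|]. destruct Hy as [Hy|Hy]; [congruence|]. auto.
Qed.

Lemma inj_plus_of_len (A B : T -> Prop) k lA lB : enum A lA -> enum B lB ->
  length lA <= length lB + k -> inj_plus A B k.
Proof.
  intros [HA HA'] [HB HB'] Hlen.
  destruct (@list_inj (T + nat) (inr 0) lA (map inl lB ++ map inr (seq 0 k))) as [f [Hf Hi]]; auto.
  - apply NoDup_app.
    + apply FinFun.Injective_map_NoDup; auto. intros x y E; inversion E; auto.
    + apply FinFun.Injective_map_NoDup; [|apply seq_NoDup]. intros x y E; inversion E; auto.
    + intros v H1 H2. apply in_map_iff in H1 as [? [<- _]]. apply in_map_iff in H2 as [? [E _]]. discriminate.
  - rewrite length_app, !length_map, length_seq; auto.
  - exists f. split.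
    + intros x Hx. apply HA' in Hx. specialize (Hf x Hx). apply in_app_iff in Hf.
      destruct Hf as [H|H]; apply in_map_iff in H as [v [E Hv]]; rewrite <- E.
      * apply HB'; auto.
      * apply in_seq in Hv; lia.
    + intros x y Hx Hy; apply Hi; apply HA'; auto.
Qed.

Lemma ded_absorb (A B : T -> Prop) k (e : nat -> T) : (forall n, B (e n)) ->
  (forall n m, e n = e m -> n = m) -> inj_plus A B (S k) -> inj_plus A B k.
Proof.
  intros He Hei [f [Hf Hi]].
  set (idx := fun y (H : exists n, y = e n) => proj1_sig (constructive_indefinite_description _ H)).
  assert (Hidx : forall y H, y = e (idx y H)).
  { intros y H. unfold idx. exact (proj2_sig (constructive_indefinite_description _ H)). }
  set (h := fun v : T + nat => match v with
     | inl y => match excluded_middle_informative (exists n, y = e n) with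
                | left H => inl (e (S (idx y H))) | right _ => inl y end
     | inr 0 => inl (e 0)
     | inr (S i) => inr i end).
  exists (fun x => h (f x)). split.
  - intros x Hx. specialize (Hf x Hx). unfold h. destruct (f x) as [y|[|i]].
    + destruct (excluded_middle_informative _); auto.
    + auto.
    + lia.
  - intros x x' Hx Hx' E. apply Hi; auto. unfold h in E.
    destruct (f x) as [y|[|i]], (f x') as [y'|[|i']]; try discriminate; auto.
    + destruct (excluded_middle_informative (exists n, y = e n)) as [Hy|Hy];
      destruct (excluded_middle_informative (exists n, y' = e n)) as [Hy'|Hy']; inversion E as [E'].
      * apply Hei in E'. injection E' as E'. rewrite (Hidx y Hy), (Hidx y' Hy'), E'. auto.
      * exfalso. apply Hy'. exists (S (idx y Hy)). auto.
      * exfalso. apply Hy. exists (S (idx y' Hy')). auto.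
      * auto.
    + destruct (excluded_middle_informative (exists n, y = e n)) as [Hy|Hy]; inversion E as [E'].
      * apply Hei in E'. discriminate.
      * exfalso. apply Hy. exists 0. auto.
    + destruct (excluded_middle_informative (exists n, y = e n)); discriminate.
    + destruct (excluded_middle_informative (exists n, y' = e n)) as [Hy|Hy]; inversion E as [E'].
      * apply Hei in E'. discriminate.
      * exfalso. apply Hy. exists 0. auto.
    + destruct (excluded_middle_informative (exists n, y' = e n)); discriminate.
    + inversion E; auto.
Qed.

End Fin.


Section Geo.
Variable X : Type.
Variable Line : (X -> Prop) -> Prop.
Hypothesis HL : is_liner Line.
Hypothesis H3 : three_long Line.

Definition ln (x y : X) : X -> Prop :=
  epsilon (inhabits (fun _ : X => True)) (fun K => Line K /\ K x /\ K y).

Lemma ln_spec x y : x <> y -> Line (ln x y) /\ ln x y x /\ ln x y y.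
Proof.
  intros H. unfold ln. apply epsilon_spec. destruct (proj2 HL x y H) as [K [HK [Hx [Hy _]]]]. eauto.
Qed.

Lemma line_eq (A B : X -> Prop) x y : Line A -> Line B -> A x -> A y -> B x -> B y -> x <> y -> A = B.
Proof.
  intros HA HB Ax Ay Bx By Hxy. destruct (proj2 HL x y Hxy) as [K [HK [Hx [Hy Hu]]]].
  rewrite (Hu A), (Hu B); auto.
Qed.

Lemma ln_eq (A : X -> Prop) x y : Line A -> A x -> A y -> x <> y -> ln x y = A.
Proof. intros HA Ax Ay H. destruct (ln_spec H) as [? [? ?]]. apply line_eq with x y; auto. Qed.

Lemma ln_sym x y : x <> y -> ln x y = ln y x.
Proof. intros H. destruct (ln_spec H) as [? [? ?]]. symmetry. apply ln_eq; auto. Qed.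

Lemma lxy_ln x y z : x <> y -> (lxy Line x y z <-> ln x y z).
Proof.
  intros H. unfold lxy. split.
  - intros [[E _]|[_ [K [HK [Kx [Ky Kz]]]]]]; [contradiction|]. rewrite (ln_eq HK Kx Ky H); auto.
  - intros Hz. right. split; auto. exists (ln x y). destruct (ln_spec H) as [? [? ?]]. auto.
Qed.

Lemma line_other (A : X -> Prop) o : Line A -> exists a, A a /\ a <> o.
Proof.
  intros HA. destruct (proj1 HL A HA) as [a [b [Hab [Ha Hb]]]].
  destruct (classic (a = o)); [exists b; split; auto; congruence| exists a; auto].
Qed.

Lemma line_third (A : X -> Prop) x y : Line A -> exists z, A z /\ z <> x /\ z <> y.
Proof.
  intros HA. destruct (H3 HA) as [a [b [c [Ha [Hb [Hc [Hab [Hac Hbc]]]]]]]].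
  destruct (classic (a = x \/ a = y)) as [Ha'|Ha']; [|exists a; tauto].
  destruct (classic (b = x \/ b = y)) as [Hb'|Hb']; [|exists b; tauto].
  exists c. split; auto. destruct Ha' as [->| ->], Hb' as [->| ->]; split; congruence.
Qed.

Lemma lines_meet (A B : X -> Prop) x y : Line A -> Line B -> A x -> B x -> A y -> B y -> A <> B -> x = y.
Proof. intros HA HB Ax Bx Ay By Hne. destruct (classic (x = y)) as [|H]; auto. exfalso. apply Hne. exact (line_eq HA HB Ax Ay Bx By H). Qed.

Lemma flat_sub (F : X -> Prop) x y : flat Line F -> F x -> F y -> x <> y -> subset (ln x y) F.
Proof. intros HF Fx Fy H z Hz. apply (HF x y Fx Fy H z). apply lxy_ln; auto. Qed.

Lemma flat_line (A : X -> Prop) : Line A -> flat Line A.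
Proof.
  intros HA x y Ax Ay H z Hz. apply lxy_ln in Hz; auto. rewrite (ln_eq HA Ax Ay H) in Hz; auto.
Qed.

Lemma closure_flat (A : X -> Prop) : flat Line (closure Line A).
Proof. intros x y Hx Hy H z Hz F HF HAF. apply (HF x y (Hx F HF HAF) (Hy F HF HAF) H z Hz). Qed.

Lemma closure_incl (A : X -> Prop) : subset A (closure Line A).
Proof. intros z Hz F HF HAF. apply HAF, Hz. Qed.

Definition span3 (u v w : X) : X -> Prop := closure Line (fun z => z = u \/ z = v \/ z = w).

Lemma span3_u u v w : span3 u v w u. Proof. apply closure_incl; auto. Qed.
Lemma span3_v u v w : span3 u v w v. Proof. apply closure_incl; auto. Qed.
Lemma span3_w u v w : span3 u v w w. Proof. apply closure_incl; auto. Qed.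

Lemma span3_ln u v w x y : span3 u v w x -> span3 u v w y -> x <> y -> subset (ln x y) (span3 u v w).
Proof. intros. apply flat_sub; auto. apply closure_flat. Qed.

Lemma plane3 u v w : u <> v -> ~ ln u v w -> plane Line (span3 u v w).
Proof.
  intros Huv Hw. destruct (ln_spec Huv) as [HL0 [Hu Hv]].
  assert (Huw : u <> w) by (intros ->; auto). assert (Hvw : v <> w) by (intros ->; auto).
  split; [apply closure_flat|]. split.
  - exists [u; v; w]. split.
    + repeat constructor; simpl; intuition.
    + split; auto. intros z Hz F HF HB. apply Hz; auto. intros y Hy. apply HB. simpl. intuition.
  - intros B HB Hsub. destruct B as [|s [|t [|r B]]]; simpl; try lia; exfalso.
    + apply (Hsub u (@span3_u u v w) (fun _ => False)); [intros x y []| intros ? []].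
    + assert (Hu' := Hsub u (@span3_u u v w) (fun z => z = s)).
      assert (Hv' := Hsub v (@span3_v u v w) (fun z => z = s)).
      assert (Hfl : flat Line (fun z => z = s)) by (intros x y -> -> H; congruence).
      assert (Hsb : subset (fun z => In z [s]) (fun z => z = s)) by (intros z [->|[]]; auto).
      apply Huv. rewrite (Hu' Hfl Hsb), (Hv' Hfl Hsb); auto.
    + inversion HB; subst. assert (Hst : s <> t) by (simpl in *; intuition).
      destruct (ln_spec Hst) as [HLst [Hs Ht]].
      assert (Hsb : subset (fun z => In z [s; t]) (ln s t)) by (intros z [->|[->|[]]]; auto).
      pose proof (Hsub u (@span3_u u v w) _ (flat_line HLst) Hsb).
      pose proof (Hsub v (@span3_v u v w) _ (flat_line HLst) Hsb).
      pose proof (Hsub w (@span3_w u v w) _ (flat_line HLst) Hsb).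
      apply Hw. rewrite (ln_eq HLst); auto.
Qed.


Definition meets (Y : X -> Prop) p x := exists z, Y z /\ ln p x z.
Definition prj (Y : X -> Prop) p x := epsilon (inhabits x) (fun w => Y w /\ ln p x w).

Lemma prj_spec Y p x : meets Y p x -> Y (prj Y p x) /\ ln p x (prj Y p x).
Proof. intros H. unfold prj. apply epsilon_spec. exact H. Qed.

Section Proj.
Variables (P Xl Y : X -> Prop) (p : X).
Hypotheses (HP : plane Line P) (HX : Line Xl) (HY : Line Y) (HXP : subset Xl P) (HYP : subset Y P)
  (Pp : P p) (nXp : ~ Xl p) (nYp : ~ Y p).

Lemma px_ne x : Xl x -> p <> x.
Proof. intros Hx ->; auto. Qed.

Lemma proj_inj x x' : Xl x -> Xl x' -> meets Y p x -> meets Y p x' -> prj Y p x = prj Y p x' -> x = x'.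
Proof.
  intros Hx Hx' Hm Hm' E. destruct (prj_spec Hm) as [Yw Hw]. destruct (prj_spec Hm') as [_ Hw'].
  rewrite <- E in Hw'. set (w := prj Y p x) in *.
  assert (Hpw : p <> w) by (intros Ew; rewrite <- Ew in Yw; auto).
  destruct (ln_spec (px_ne Hx)) as [H1 [H1p H1x]]. destruct (ln_spec (px_ne Hx')) as [H2 [H2p H2x]].
  assert (E12 : ln p x = ln p x') by (apply (line_eq H1 H2 H1p Hw H2p Hw' Hpw)).
  destruct (classic (x = x')) as [|Hne]; auto. exfalso.
  apply nXp. rewrite <- (line_eq H1 HX H1x (eq_ind_r (fun K => K x') H2x E12) Hx Hx' Hne). auto.
Qed.

Lemma proj_defect (Hpr : proclus Line) x x' : Xl x -> Xl x' -> ~ meets Y p x -> ~ meets Y p x' -> x = x'.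
Proof.
  intros Hx Hx' Hm Hm'.
  destruct (ln_spec (px_ne Hx)) as [H1 [H1p H1x]]. destruct (ln_spec (px_ne Hx')) as [H2 [H2p H2x]].
  assert (HPf : flat Line P) by (apply HP).
  assert (E12 : ln p x = ln p x').
  { apply (Hpr P Y p HP HY HYP Pp nYp); auto.
    - intros z Hz. split. { apply (flat_sub HPf Pp (HXP Hx) (px_ne Hx)); auto. }
      intros Yz. apply Hm. exists z; auto.
    - intros z Hz. split. { apply (flat_sub HPf Pp (HXP Hx') (px_ne Hx')); auto. }
      intros Yz. apply Hm'. exists z; auto. }
  destruct (classic (x = x')) as [|Hne]; auto. exfalso.
  apply nXp. rewrite <- (line_eq H1 HX H1x (eq_ind_r (fun K => K x') H2x E12) Hx Hx' Hne). auto.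
Qed.

Lemma proj_miss x w : Xl x -> meets Y p x -> Y w -> (forall z, ln p w z -> ~ Xl z) -> prj Y p x <> w.
Proof.
  intros Hx Hm Yw Hw E. destruct (prj_spec Hm) as [_ Hpw]. rewrite E in Hpw.
  assert (Hpw' : p <> w) by (intros Ew; rewrite <- Ew in Yw; auto).
  destruct (ln_spec (px_ne Hx)) as [H1 [H1p H1x]].
  rewrite <- (ln_eq H1 H1p Hpw Hpw') in H1x. apply (Hw x); auto.
Qed.

Lemma proj_inj_plus (Hpr : proclus Line) : inj_plus Xl Y 1.
Proof.
  exists (fun x => if excluded_middle_informative (meets Y p x) then inl (prj Y p x) else inr 0).
  split.
  - intros x Hx. destruct (excluded_middle_informative _) as [Hm|]; auto. apply (prj_spec Hm).
  - intros x x' Hx Hx'.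
    destruct (excluded_middle_informative (meets Y p x)) as [Hm|Hm];
    destruct (excluded_middle_informative (meets Y p x')) as [Hm'|Hm']; intros E; inversion E.
    + apply proj_inj; auto.
    + apply proj_defect; auto.
Qed.

Lemma proj_count (Hpr : proclus Line) lY : enum Y lY -> exists lX, enum Xl lX /\
  length lX <= length lY + 1 /\
  ((forall x, Xl x -> meets Y p x) -> length lX <= length lY) /\
  ((exists w, Y w /\ forall z, ln p w z -> ~ Xl z) -> length lX <= length lY) /\
  ((forall x, Xl x -> meets Y p x) -> (exists w, Y w /\ forall z, ln p w z -> ~ Xl z) ->
     S (length lX) <= length lY).
Proof.
  intros HlY. destruct (inj_plus_fin (proj_inj_plus Hpr) HlY) as [lX [HlX Hlen]].
  exists lX. split; auto. split; auto.
  set (lD := filter (fun x => pb (meets Y p x)) lX).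
  set (lN := filter (fun x => negb (pb (meets Y p x))) lX).
  assert (Hsplit : length lX = length lD + length lN) by apply filter_split.
  assert (HD : enum (fun x => Xl x /\ pb (meets Y p x) = true) lD) by (apply filter_enum; auto).
  assert (HN : enum (fun x => Xl x /\ negb (pb (meets Y p x)) = true) lN) by (apply filter_enum; auto).
  assert (HN1 : length lN <= 1).
  { apply len_le_1. apply HN. intros a b Ha Hb. apply HN in Ha as [Ha Ha']. apply HN in Hb as [Hb Hb'].
    apply proj_defect; auto.
    - intros Hm. apply pb_true in Hm. rewrite Hm in Ha'. discriminate.
    - intros Hm. apply pb_true in Hm. rewrite Hm in Hb'. discriminate. }
  assert (HN0 : (forall x, Xl x -> meets Y p x) -> length lN = 0).
  { intros Hall. destruct lN as [|a l] eqn:El; auto. exfalso.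
    assert (Ha : In a (a :: l)) by (simpl; auto). apply HN in Ha as [Ha Ha'].
    rewrite (proj2 (pb_true _) (Hall a Ha)) in Ha'. discriminate. }
  assert (HDm : forall x, Xl x /\ pb (meets Y p x) = true -> meets Y p x) by (intros x [_ H]; apply pb_true; auto).
  assert (HDl : length lD <= length lY).
  { apply (@inj_len _ _ Y lD lY (prj Y p) HD HlY).
    - intros x Hx. apply (prj_spec (HDm x Hx)).
    - intros x y Hx Hy. apply proj_inj; try apply Hx; try apply Hy; auto. }
  assert (HDw : (exists w, Y w /\ forall z, ln p w z -> ~ Xl z) -> S (length lD) <= length lY).
  { intros [w [Yw Hw]].
    destruct (enum_remove w HlY Yw) as [l' [Hl' Hl'len]].
    assert (length lD <= length l'); [|lia].
    apply (@inj_len _ _ _ lD l' (prj Y p) HD Hl').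
    - intros x Hx. split. apply (prj_spec (HDm x Hx)). apply proj_miss; auto; apply Hx.
    - intros x y Hx Hy. apply proj_inj; try apply Hx; try apply Hy; auto. }
  repeat split; intros; try lia.
  - specialize (HN0 H). lia.
  - specialize (HDw H). lia.
  - specialize (HN0 H). specialize (HDw H0). lia.
Qed.

End Proj.


Lemma other_not (A B : X -> Prop) o : Line A -> Line B -> A o -> B o -> A <> B -> exists a, A a /\ ~ B a /\ a <> o.
Proof.
  intros HA HB Ao Bo Hne. destruct (line_other o HA) as [a [Aa Hao]]. exists a. split; auto. split; auto.
  intros Ba. apply Hne. apply (line_eq HA HB Aa Ao Ba Bo Hao).
Qed.

Lemma center (A B : X -> Prop) a b : Line A -> Line B -> A a -> ~ B a -> B b -> ~ A b ->
  exists q, ln a b q /\ ~ A q /\ ~ B q /\ q <> a /\ q <> b.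
Proof.
  intros HA HB Aa nBa Bb nAb. assert (Hab : a <> b) by (intros ->; auto).
  destruct (ln_spec Hab) as [HN [Na Nb]].
  destruct (line_third a b HN) as [q [Nq [Hqa Hqb]]]. exists q. repeat split; auto.
  - intros Aq. apply nAb. rewrite <- (line_eq HN HA Na Nq Aa Aq (not_eq_sym Hqa)). auto.
  - intros Bq. apply nBa. rewrite <- (line_eq HN HB Nb Nq Bb Bq (not_eq_sym Hqb)). auto.
Qed.

Lemma line_cases (A B : X -> Prop) : Line A -> Line B ->
  A = B \/ (exists o a, A o /\ B o /\ A a /\ ~ B a) \/ (forall z, A z -> ~ B z).
Proof.
  intros HA HB. destruct (classic (exists o, A o /\ B o)) as [[o [Ao Bo]]|Hn].
  - destruct (classic (A = B)) as [|Hne]; auto. right; left.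
    destruct (@other_not A B o HA HB Ao Bo Hne) as [a [? [? ?]]]. exists o, a; auto.
  - right; right. intros z Az Bz. apply Hn; eauto.
Qed.

Lemma proclus_meet (Hpr : proclus Line) (A B : X -> Prop) o a : Line A -> Line B -> A o -> B o -> A a -> ~ B a ->
  inj_plus A B 1.
Proof.
  intros HA HB Ao Bo Aa nBa.
  assert (HAB : A <> B) by (intros E; subst; auto).
  destruct (@other_not B A o HB HA Bo Ao (not_eq_sym HAB)) as [b [Bb [nAb Hbo]]].
  assert (Hao : a <> o) by (intros ->; auto).
  assert (Hoa : o <> a) by auto.
  assert (EA : ln o a = A) by (apply ln_eq; auto).
  assert (Hob : o <> b) by auto.
  assert (EB : ln o b = B) by (apply ln_eq; auto).
  assert (HP : plane Line (span3 o a b)) by (apply plane3; auto; rewrite EA; auto).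
  destruct (@center A B a b HA HB Aa nBa Bb nAb) as [q [Nq [nAq [nBq [Hqa Hqb]]]]].
  assert (Hab : a <> b) by (intros ->; auto).
  apply (@proj_inj_plus (span3 o a b) A B q); auto.
  - rewrite <- EA. apply span3_ln; auto. apply span3_u. apply span3_v.
  - rewrite <- EB. apply span3_ln; auto. apply span3_u. apply span3_w.
  - apply (span3_ln (@span3_v o a b) (@span3_w o a b) Hab); auto.
Qed.

Lemma proaff_meet (Hpa : proaffine Line) (A B : X -> Prop) o a : Line A -> Line B -> A o -> B o -> A a -> ~ B a ->
  inj_plus A B 1.
Proof.
  intros HA HB Ao Bo Aa nBa.
  assert (HAB : A <> B) by (intros E; subst; auto).
  destruct (@other_not B A o HB HA Bo Ao (not_eq_sym HAB)) as [b [Bb [nAb Hbo]]].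
  assert (Hoa : o <> a) by (intros ->; auto).
  assert (EA : ln o a = A) by (apply ln_eq; auto).
  assert (Hob : o <> b) by auto.
  assert (EB : ln o b = B) by (apply ln_eq; auto).
  assert (Hba : b <> a) by (intros ->; auto).
  destruct (@center B A b a HB HA Bb nAb Aa nBa) as [p [Np [nBp [nAp [Hpb Hpa']]]]].
  destruct (Hpa o b a p) as [u [Hu Hv]].
  - apply lxy_ln; auto.
  - rewrite lxy_ln, EB; auto.
  - set (f := fun v => epsilon (inhabits v) (fun w => lxy Line v p w /\ B w)).
    assert (Hf : forall v, A v -> v <> u -> lxy Line v p (f v) /\ B (f v)).
    { intros v Av Hvu. unfold f. apply epsilon_spec.
      destruct (Hv v) as [w [H1 H2]]; auto. { rewrite lxy_ln, EA; auto. }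
      exists w. split; auto. rewrite lxy_ln, EB in H2; auto. }
    exists (fun v => if excluded_middle_informative (v = u) then inr 0 else inl (f v)). split.
    + intros v Av. destruct (excluded_middle_informative _); auto. apply Hf; auto.
    + intros v v' Av Av'.
      destruct (excluded_middle_informative (v = u)) as [->|Hvu];
      destruct (excluded_middle_informative (v' = u)) as [->|Hvu']; intros E; inversion E as [E']; auto.
      destruct (Hf v Av Hvu) as [H1 H2]. destruct (Hf v' Av' Hvu') as [H1' H2'].
      rewrite <- E' in H1'. set (w := f v) in *.
      assert (Hvp : v <> p) by (intros ->; auto). assert (Hvp' : v' <> p) by (intros ->; auto).
      apply lxy_ln in H1; auto. apply lxy_ln in H1'; auto.
      assert (Hwp : p <> w) by (intros Ew; rewrite <- Ew in H2; auto).
      destruct (ln_spec Hvp) as [K1 [K1v K1p]]. destruct (ln_spec Hvp') as [K2 [K2v K2p]].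
      assert (E12 : ln v p = ln v' p) by (apply (line_eq K1 K2 K1p H1 K2p H1' Hwp)).
      destruct (classic (v = v')) as [|Hne]; auto. exfalso. apply nAp.
      rewrite <- E12 in K2v. rewrite <- (line_eq K1 HA K1v K2v Av Av' Hne). auto.
Qed.


Lemma three_card (A : X -> Prop) l : Line A -> enum A l -> 3 <= length l.
Proof.
  intros HA [Hn Hl]. destruct (H3 HA) as [a [b [c [Ha [Hb [Hc [Hab [Hac Hbc]]]]]]]].
  change 3 with (length [a; b; c]). apply NoDup_incl_length.
  - repeat constructor; simpl; intuition.
  - intros z [<-|[<-|[<-|[]]]]; apply Hl; auto.
Qed.

Section CC.
Hypothesis Hpr : proclus Line.
Variables (L M : X -> Prop) (lL lM : list X).
Hypotheses (HLl : Line L) (HMl : Line M) (Hdisj : forall z, L z -> ~ M z)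
  (HeL : enum L lL) (HeM : enum M lM) (Hlen : length lL = length lM + 2).
Variables (b b' c0 c0' : X).
Hypotheses (Mb : M b) (Mb' : M b') (Hbb' : b <> b') (Lc0 : L c0) (Lc0' : L c0') (Hc0 : c0 <> c0').

Let m := length lL.
Lemma m_ge5 : 5 <= m.
Proof. unfold m. pose proof (three_card HMl HeM). lia. Qed.

Lemma nLb : ~ L b.
Proof. intros H; apply (Hdisj H); auto. Qed.

Lemma bc_ne c : L c -> b <> c.
Proof. intros Lc E. apply nLb. rewrite E; auto. Qed.

Let tau := span3 c0 c0' b.

Lemma EL : ln c0 c0' = L.
Proof. apply ln_eq; auto. Qed.

Lemma tau_plane : plane Line tau.
Proof. apply plane3; auto. rewrite EL. apply nLb. Qed.

Lemma tau_flat : flat Line tau.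
Proof. apply tau_plane. Qed.

Lemma L_tau : subset L tau.
Proof. rewrite <- EL. apply span3_ln; auto; [apply span3_u|apply span3_v]. Qed.

Lemma b_tau : tau b.
Proof. apply span3_w. Qed.

Lemma ln_tau x y : tau x -> tau y -> x <> y -> subset (ln x y) tau.
Proof. intros. apply flat_sub; auto. apply tau_flat. Qed.

Lemma N_spec c : L c -> Line (ln b c) /\ ln b c b /\ ln b c c /\ subset (ln b c) tau.
Proof.
  intros Lc. destruct (ln_spec (bc_ne Lc)) as [? [? ?]]. repeat split; auto.
  apply ln_tau; auto. apply b_tau. apply L_tau; auto. apply bc_ne; auto.
Qed.

Lemma N_notL c x : L c -> ln b c x -> L x -> x = c.
Proof.
  intros Lc Nx Lx. destruct (N_spec Lc) as [HN [Nb [Nc _]]].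
  destruct (classic (x = c)) as [|Hne]; auto. exfalso. apply nLb.
  rewrite <- (line_eq HN HLl Nx Nc Lx Lc Hne); auto.
Qed.

Lemma N_size c : L c -> exists l, enum (ln b c) l /\ length l = m - 1.
Proof.
  intros Lc. destruct (N_spec Lc) as [HN [Nb [Nc Nt]]].
  assert (nMc : ~ M c) by (apply Hdisj; auto).
  assert (nNb' : ~ ln b c b').
  { intros Nb'. apply nMc. rewrite <- (line_eq HN HMl Nb Nb' Mb Mb' Hbb'). auto. }
  assert (EM : ln b b' = M) by (apply ln_eq; auto).
  assert (HP1 : plane Line (span3 b b' c)) by (apply plane3; auto; rewrite EM; auto).
  assert (Hcb' : c <> b') by (intros ->; auto).
  destruct (@center (ln b c) M c b' HN HMl Nc nMc Mb' nNb') as [q [Qq [nNq [nMq [_ _]]]]].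
  destruct (@proj_count (span3 b b' c) (ln b c) M q HP1 HN HMl) with (lY := lM) as [lN [HlN [Hl1 _]]]; auto.
  - intros z Hz. assert (E : ln b c = ln b c) by auto.
    apply (span3_ln (@span3_u b b' c) (@span3_w b b' c) (bc_ne Lc)); auto.
  - rewrite <- EM. apply span3_ln; auto; [apply span3_u|apply span3_v].
  - apply (span3_ln (@span3_w b b' c) (@span3_v b b' c) Hcb'); auto.
  - destruct (line_other c HLl) as [c' [Lc' Hc'c]].
    assert (nNc' : ~ ln b c c').
    { intros H. apply Hc'c. apply (N_notL Lc H Lc'). }
    destruct (@center L (ln b c) c' b HLl HN Lc' nNc' Nb nLb) as [q' [Qq' [nLq' [nNq' [_ _]]]]].
    destruct (@proj_count tau L (ln b c) q' tau_plane HLl HN L_tau Nt) with (lY := lN) as [lL' [HlL' [Hl2 _]]]; auto.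
    + refine (ln_tau _ _ _ _ Qq'). apply L_tau; auto. apply b_tau. intros E. apply (bc_ne Lc'); auto.
    + exists lN. split; auto. pose proof (enum_len HlL' HeL). unfold m. lia.
Qed.


Definition enumN c := epsilon (inhabits nil) (fun l => enum (ln b c) l /\ length l = m - 1).
Lemma enumN_spec c : L c -> enum (ln b c) (enumN c) /\ length (enumN c) = m - 1.
Proof. intros Lc. unfold enumN. apply epsilon_spec. apply N_size; auto. Qed.

Lemma NoPar x : tau x -> x <> b -> exists c, L c /\ ln b x c.
Proof.
  intros Tx Hxb. apply NNPP. intros H.
  assert (Hbx : b <> x) by auto.
  destruct (ln_spec Hbx) as [Hl [Hlb Hlx]].
  assert (nLx : ~ L x) by (intros Lx; apply H; exists x; auto).
  destruct (N_spec Lc0) as [HN [Nb [Nc Nt]]].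
  assert (nNx : ~ ln b c0 x).
  { intros Nx. apply H. exists c0. split; auto.
    rewrite (line_eq Hl HN Hlb Hlx Nb Nx Hbx). auto. }
  destruct (enumN_spec Lc0) as [He1 He2].
  destruct (@proj_count tau L (ln b c0) x tau_plane HLl HN L_tau Nt Tx nLx nNx Hpr _ He1)
    as [lL' [HlL' [_ [_ [Hc3 _]]]]].
  assert (length lL' <= length (enumN c0)).
  { apply Hc3. exists b. split; auto. intros z Hz Lz. apply H. exists z. split; auto.
    rewrite ln_sym; auto. }
  pose proof (enum_len HlL' HeL). pose proof m_ge5. unfold m in *. lia.
Qed.

Lemma Par c x : L c -> tau x -> ~ L x -> ~ ln b c x -> exists l, L l /\ forall z, ln x l z -> ~ ln b c z.
Proof.
  intros Lc Tx nLx nNx. apply NNPP. intros H.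
  destruct (N_spec Lc) as [HN [Nb [Nc Nt]]].
  destruct (enumN_spec Lc) as [He1 He2].
  destruct (@proj_count tau L (ln b c) x tau_plane HLl HN L_tau Nt Tx nLx nNx Hpr _ He1)
    as [lL' [HlL' [_ [Hc2 _]]]].
  assert (length lL' <= length (enumN c)).
  { apply Hc2. intros l Ll. apply NNPP. intros Hm. apply H. exists l. split; auto.
    intros z Hz Nz. apply Hm. exists z. auto. }
  pose proof (enum_len HlL' HeL). pose proof m_ge5. unfold m in *. lia.
Qed.


Definition Sx x := tau x /\ ~ L x.

Lemma ln_through c x : L c -> ln b x c -> x <> b -> ln b c = ln b x.
Proof.
  intros Lc Hc Hxb. assert (Hbx : b <> x) by auto. destruct (ln_spec Hbx) as [Hl [Hlb Hlx]].
  apply ln_eq; auto. apply bc_ne; auto.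
Qed.

Lemma S_enum : exists lS, enum Sx lS.
Proof.
  apply (cover_enum Sx (b :: concat (map enumN lL))). intros x [Tx nLx].
  destruct (classic (x = b)) as [->|Hxb]; [left; auto|right].
  destruct (NoPar Tx Hxb) as [c [Lc Hc]]. apply in_concat. exists (enumN c). split.
  - apply in_map, HeL, Lc.
  - apply (enumN_spec Lc). rewrite (ln_through Lc Hc Hxb). apply ln_spec; auto.
Qed.

Definition gfun x := epsilon (inhabits x) (fun c => L c /\ ln b x c).
Lemma gfun_spec x : Sx x -> x <> b -> L (gfun x) /\ ln b x (gfun x).
Proof. intros [Tx _] Hxb. unfold gfun. apply epsilon_spec. apply NoPar; auto. Qed.

Lemma ln_on c x : L c -> ln b c x -> x <> b -> ln b x = ln b c.
Proof.
  intros Lc Nx Hxb. destruct (N_spec Lc) as [HN [Nb _]]. apply ln_eq; auto.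
Qed.

Lemma count1 lS : enum Sx lS -> length lS = 1 + m * (m - 3).
Proof.
  intros HS. assert (Sb : Sx b) by (split; [apply b_tau|apply nLb]).
  destruct (enum_remove b HS Sb) as [lS' [HS' Hlen']].
  assert (Hg : forall x, In x lS' -> In (gfun x) lL).
  { intros x Hx. apply HS' in Hx as [Sxx Hxb]. apply HeL. apply (gfun_spec Sxx Hxb). }
  rewrite (@count_partition X gfun lL lS' (proj1 HeL) Hg) in Hlen'.
  erewrite (@sumn_const X lL _ (m - 3)) in Hlen'. { unfold m in *. lia. }
  intros c Hc. apply HeL in Hc as Lc.
  pose proof (filter_enum (fun x => if edec (gfun x) c then true else false) HS') as HB.
  destruct (enumN_spec Lc) as [HN HNl].
  destruct (N_spec Lc) as [_ [Nb [Nc _]]].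
  destruct (enum_remove b HN Nb) as [l1 [Hl1 Hl1len]].
  destruct (enum_remove c Hl1 (conj Nc (not_eq_sym (bc_ne Lc)))) as [l2 [Hl2 Hl2len]].
  assert (Hl2' : enum (fun x => (Sx x /\ x <> b) /\ (if edec (gfun x) c then true else false) = true) l2).
  { refine (enum_ext _ _ Hl2). intros x. split.
    - intros [[Nx Hxb] Hxc]. assert (Sxx : Sx x).
      { split. { apply (N_spec Lc); auto. } intros Lx. apply Hxc. apply (N_notL Lc Nx Lx). }
      split; [split; auto|]. destruct (edec (gfun x) c) as [|Hne]; auto. exfalso.
      destruct (gfun_spec Sxx Hxb) as [Lg Hg'].
      rewrite (ln_on Lc Nx Hxb) in Hg'. apply Hne. apply (N_notL Lc Hg' Lg).
    - intros [[Sxx Hxb] Hgc]. destruct (edec (gfun x) c) as [Ec|]; [|discriminate].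
      destruct (gfun_spec Sxx Hxb) as [Lg Hg'].
      assert (Nx : ln b c x).
      { rewrite Ec in Hg'. rewrite (ln_through Lc Hg' Hxb). apply ln_spec; auto. }
      split; [split; auto|]. intros ->. apply (proj2 Sxx). auto. }
  rewrite (enum_len HB Hl2'). lia.
Qed.


Let Y0 := ln b c0.

Definition dfun x := if excluded_middle_informative (Y0 x) then c0
  else epsilon (inhabits c0) (fun l => L l /\ forall z, ln x l z -> ~ Y0 z).

Lemma dfun_spec x : Sx x -> L (dfun x) /\ x <> dfun x /\
  ((Y0 x /\ dfun x = c0) \/ (~ Y0 x /\ forall z, ln x (dfun x) z -> ~ Y0 z)).
Proof.
  intros [Tx nLx]. unfold dfun. destruct (excluded_middle_informative (Y0 x)) as [Hy|Hy].
  - split; auto. split; auto. intros ->; auto.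
  - assert (Hs : L (epsilon (inhabits c0) (fun l => L l /\ forall z, ln x l z -> ~ Y0 z)) /\
       forall z, ln x (epsilon (inhabits c0) (fun l => L l /\ forall z, ln x l z -> ~ Y0 z)) z -> ~ Y0 z).
    { apply epsilon_spec. apply Par; auto. }
    destruct Hs as [Hs1 Hs2]. split; auto. split; auto. intros E. rewrite <- E in Hs1. auto.
Qed.

Definition cls x := ln x (dfun x).

Definition inclass (K : X -> Prop) := Line K /\ subset K tau /\ (K = Y0 \/ forall z, K z -> ~ Y0 z).

Lemma Y0_spec : Line Y0 /\ Y0 b /\ Y0 c0 /\ subset Y0 tau.
Proof. apply N_spec; auto. Qed.

Lemma cls_inclass x : Sx x -> inclass (cls x) /\ cls x x /\ cls x (dfun x).
Proof.
  intros Sxx. destruct (dfun_spec Sxx) as [Ld [Hxd Hc]].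
  destruct (ln_spec Hxd) as [Hl [Hlx Hld]]. unfold cls. split; auto. split; auto. split.
  - apply ln_tau; auto. apply Sxx. apply L_tau; auto.
  - destruct Hc as [[Yx Ed]|[_ Hz]]; auto. left.
    destruct Y0_spec as [HY [_ [Yc _]]]. rewrite Ed in *. apply ln_eq; auto.
Qed.

Lemma U K K' z : inclass K -> inclass K' -> K z -> K' z -> K = K'.
Proof.
  intros [HK [KT Kc]] [HK' [KT' Kc']] Kz Kz'.
  destruct Kc as [->|Kd], Kc' as [->|Kd']; auto.
  - exfalso. apply (Kd' z); auto.
  - exfalso. apply (Kd z); auto.
  - destruct Y0_spec as [HY [_ [_ YT]]].
    apply (@Hpr tau Y0 z tau_plane HY YT (KT z Kz) (Kd z Kz) K K' HK HK' Kz); auto.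
    + intros y Ky. split; auto.
    + intros y Ky. split; auto.
Qed.

Lemma cls_size x : Sx x -> exists l, enum (cls x) l /\ length l = m - 1.
Proof.
  intros Sxx. destruct (cls_inclass Sxx) as [[HK [KT Kc]] [Kx Kd]].
  destruct (dfun_spec Sxx) as [Ld _].
  destruct Kc as [E|Kd'].
  - rewrite E. exists (enumN c0). apply enumN_spec; auto.
  - destruct Y0_spec as [HY [Yb [Yc YT]]].
    assert (nKb : ~ cls x b) by (intros H; apply (Kd' b); auto).
    destruct (@proj_count tau (cls x) L b tau_plane HK HLl KT L_tau b_tau nKb nLb Hpr _ HeL)
      as [lK [HlK [_ [_ [_ H4]]]]].
    assert (Hle : S (length lK) <= m).
    { apply H4.
      - intros y Ky. assert (Hyb : y <> b) by (intros ->; auto).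
        destruct (NoPar (KT y Ky) Hyb) as [c [Lc Hc]]. exists c; auto.
      - exists c0. split; [auto|]. intros z Hz Kz. apply (Kd' z Kz). exact Hz. }
    destruct (@proj_count tau L (cls x) b tau_plane HLl HK L_tau KT b_tau nLb nKb Hpr _ HlK)
      as [lL' [HlL' [H1 _]]].
    pose proof (enum_len HlL' HeL). exists lK. split; auto. unfold m in *. lia.
Qed.

Lemma block_char x z : Sx x -> (Sx z /\ dfun z = dfun x) <-> (cls x z /\ z <> dfun x).
Proof.
  intros Sxx. destruct (cls_inclass Sxx) as [Ix [Kx Kd]]. destruct (dfun_spec Sxx) as [Ld _].
  split.
  - intros [Szz E]. destruct (cls_inclass Szz) as [Iz [Kz Kzd]].
    rewrite E in Kzd. rewrite <- (@U (cls z) (cls x) (dfun x) Iz Ix Kzd Kd). split; auto. intros ->. apply (proj2 Szz); auto.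
  - intros [Kz Hzd].
    assert (nLz : ~ L z).
    { intros Lz. apply (proj2 Sxx). destruct Ix as [HK _].
      rewrite <- (line_eq HK HLl Kz Kd Lz Ld Hzd). auto. }
    assert (Szz : Sx z) by (split; auto; apply Ix; auto).
    split; auto. destruct (cls_inclass Szz) as [Iz [Kzz Kzd]].
    destruct (dfun_spec Szz) as [Ldz _].
    rewrite (@U (cls z) (cls x) z Iz Ix Kzz Kz) in Kzd.
    apply NNPP. intros Hne. apply (proj2 Sxx). destruct Ix as [HK _].
    rewrite <- (line_eq HK HLl Kzd Kd Ldz Ld Hne). auto.
Qed.

Lemma count2 lS : enum Sx lS -> exists t, t <= m /\ length lS = t * (m - 2).
Proof.
  intros HS.
  assert (Hg : forall x, In x lS -> In (dfun x) lL).
  { intros x Hx. apply HS in Hx. apply HeL. apply (dfun_spec Hx). }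
  rewrite (@count_partition X dfun lL lS (proj1 HeL) Hg).
  destruct (sumn_two_vals lL (fun d => length (filter (fun x => if edec (dfun x) d then true else false) lS)) (k := m - 2))
    as [t [Ht Hs]].
  - intros d Hd.
    pose proof (filter_enum (fun x => if edec (dfun x) d then true else false) HS) as HB.
    destruct (classic (exists x, Sx x /\ dfun x = d)) as [[x [Sxx Ex]]|Hn].
    + right. destruct (cls_size Sxx) as [lK [HlK HlKn]].
      destruct (enum_remove (dfun x) HlK (proj2 (proj2 (cls_inclass Sxx)))) as [l' [Hl' Hl'n]].
      assert (Hl'' : enum (fun z => Sx z /\ (if edec (dfun z) d then true else false) = true) l').
      { refine (enum_ext _ _ Hl'). intros z. rewrite <- (block_char z Sxx). subst d.
        destruct (edec (dfun z) (dfun x)); split; intros [? ?]; split; auto; congruence. }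
      rewrite (enum_len HB Hl''). lia.
    + left. destruct (filter _ lS) as [|a l] eqn:El; auto. exfalso.
      assert (Ha : In a (a :: l)) by (simpl; auto). apply HB in Ha as [Sa Ha].
      destruct (edec (dfun a) d); [|discriminate]. apply Hn; eauto.
  - exists t. split; [exact Ht|exact Hs].
Qed.

Lemma CC_false : False.
Proof.
  destruct S_enum as [lS HS]. pose proof (count1 HS). destruct (count2 HS) as [t [Ht Ht']].
  pose proof m_ge5. rewrite H in Ht'. clear H.
  destruct (le_lt_dec t (m - 2)) as [Hle|Hlt]; nia.
Qed.

End CC.
End Geo.
Unset Implicit Arguments.

Lemma transversal (X : Type) (Line : (X -> Prop) -> Prop) (HL : is_liner Line) (H3 : three_long Line)
  (meet : forall A B o a, Line A -> Line B -> A o -> B o -> A a -> ~ B a -> inj_plus A B 1)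
  (L M : X -> Prop) : Line L -> Line M -> (forall z, L z -> ~ M z) ->
  exists a a2 b b', L a /\ L a2 /\ a <> a2 /\ M b /\ M b' /\ b <> b' /\ inj_plus L M 2.
Proof.
  intros HLl HMl Hd.
  destruct (proj1 HL L HLl) as [a [a2 [Ha [La La2]]]].
  destruct (proj1 HL M HMl) as [b [b' [Hb [Mb Mb']]]].
  exists a, a2, b, b'. repeat split; auto.
  assert (Hab : a <> b) by (intros ->; apply (Hd b); auto).
  destruct (ln_spec HL Hab) as [HN [Na Nb]].
  assert (nNa2 : ~ ln Line a b a2).
  { intros H. apply (Hd b); auto. rewrite <- (line_eq HL _ _ HN HLl Na H La La2 Ha). auto. }
  assert (nMa : ~ M a) by (apply Hd; auto).
  apply (@inj_plus_comp X L (ln Line a b) M 1 1).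
  - apply (meet L (ln Line a b) a a2); auto.
  - apply (meet (ln Line a b) M b a); auto.
Qed.

Theorem corollary3p3p26 (X : Type) (Line : (X -> Prop) -> Prop) :
  is_liner Line -> three_long Line ->
  (proaffine Line ->
     forall L M, Line L -> Line M -> card_le_plus L M 2) /\
  (proclus Line ->
     forall L M, Line L -> Line M -> card_le_plus L M 1).
Proof.
  intros HL H3. split.
  - intros Hpa L M HLl HMl. apply inj_plus_card.
    destruct (line_cases HL L M HLl HMl) as [->|[[o [a [Lo [Mo [La nMa]]]]]|Hd]].
    + apply inj_plus_refl.
    + apply (inj_plus_mono (k := 1)); auto. apply (proaff_meet HL H3 Hpa L M o a); auto.
    + destruct (transversal X Line HL H3 (proaff_meet HL H3 Hpa) L M HLl HMl Hd) as [_ [_ [_ [_ [_ [_ [_ [_ [_ [_ H]]]]]]]]]]. exact H.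
  - intros Hpr L M HLl HMl. apply inj_plus_card.
    destruct (line_cases HL L M HLl HMl) as [->|[[o [a [Lo [Mo [La nMa]]]]]|Hd]].
    + apply inj_plus_refl.
    + apply (proclus_meet HL H3 Hpr L M o a); auto.
    + destruct (transversal X Line HL H3 (proclus_meet HL H3 Hpr) L M HLl HMl Hd)
        as [a [a2 [b [b' [La [La2 [Ha [Mb [Mb' [Hb H12]]]]]]]]]].
      destruct (fin_or_ded M) as [[lM HeM]|[e [He Hei]]].
      * destruct (inj_plus_fin H12 HeM) as [lL [HeL Hlen]].
        destruct (le_lt_dec (length lL) (length lM + 1)) as [Hle|Hlt].
        -- apply (inj_plus_of_len 1 HeL HeM Hle).
        -- exfalso. assert (Heq : length lL = length lM + 2) by lia.
           apply (CC_false HL H3 Hpr HLl HMl Hd HeL HeM Heq Mb Mb' Hb La La2 Ha).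
      * apply (ded_absorb e He Hei H12).
Qed.
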